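(* (i) For every $n\in\mathbb{N}$ and $a\in\mathbb{C}\setminus\mathbb{Z}^-$, \[ \sum_{j=0}^{n}\sum_{i=0}^{j}\frac{\binom{n+a+1}{i}}{\binom{n+a}{j}}(-1)^i=\frac{(-1)^n+1}{2}. \] (ii) For every $n\in\mathbb{N}$, \[ \sum_{j=0}^{n}\sum_{i=0}^{j}\frac{\binom{n+2}{i}}{\binom{n}{j}}(-1)^{n-i}=(n+1)\Big(H_{n+1}-H_{\lfloor\frac{n+1}{2}\rfloor}\Big). \]
   Context: For $x\in\mathbb{C}$, $i\in\mathbb{N}$: $\binom{x}{i}=x(x-1)\cdots(x-i+1)/i!$. $\mathbb{Z}^-=\{-1,-2,\dots\}$. $H_n=\sum_{k=1}^{n}\frac1k$ is the $n$-th harmonic number ($H_0=0$). *)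

(* Defs.v *)
From HB Require Import structures.
From mathcomp Require Import all_boot all_order all_algebra.
Set Implicit Arguments. Unset Strict Implicit. Unset Printing Implicit Defensive.
Import Order.TTheory GRing.Theory Num.Theory.
Local Open Scope ring_scope.

Definition binomR (R : fieldType) (x : R) (i : nat) : R :=
  (\prod_(k < i) (x - k%:R)) / (i`!)%:R.

Definition harmonic (n : nat) : rat := \sum_(k < n) ((k.+1)%:R)^-1.

(* Main.v *)
Require Import Defs.
From HB Require Import structures.
From mathcomp Require Import all_boot all_order all_algebra.
From mathcomp Require Import ring.
Import Order.TTheory GRing.Theory Num.Theory.
Local Open Scope ring_scope.

Lemma fact_neq0 (R : numFieldType) j : (j`!)%:R != 0 :> R.
Proof. by rewrite pnatr_eq0 -lt0n fact_gt0. Qed.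

Lemma binomR0 (R : numFieldType) (y : R) : binomR y 0 = 1.
Proof. by rewrite /binomR big_ord0 /= divr1. Qed.

Lemma pascalR (R : numFieldType) (y : R) j :
  binomR y j.+1 = binomR (y - 1) j.+1 + binomR (y - 1) j.
Proof.
rewrite /binomR big_ord_recl big_ord_recr /=.
have -> : \prod_(i < j) (y - (bump 0 i)%:R) = \prod_(i < j) (y - 1 - i%:R).
  by apply: eq_bigr => i _; rewrite /bump /= add1n -natr1; ring.
rewrite factS natrM.
have h1 := fact_neq0 R j.
have h2 : (j.+1)%:R != 0 :> R by rewrite pnatr_eq0.
field; by rewrite ?nat1r ?h1 ?h2.
Qed.

Lemma alt_binomR (R : numFieldType) (y : R) j :
  \sum_(i < j.+1) (-1) ^+ i * binomR y i = (-1) ^+ j * binomR (y - 1) j.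
Proof.
elim: j => [|j IH]; first by rewrite big_ord1 !binomR0.
rewrite big_ord_recr /= IH pascalR exprS; ring.
Qed.

Lemma alt_bin (R : numFieldType) m j :
  \sum_(i < j.+1) (-1) ^+ i * ('C(m.+1, i))%:R = (-1) ^+ j * ('C(m, j))%:R :> R.
Proof.
elim: j => [|j IH]; first by rewrite big_ord1 !bin0.
rewrite big_ord_recr /= IH binS natrD exprS; ring.
Qed.

Lemma sum_sign (R : numFieldType) n :
  \sum_(j < n.+1) (-1) ^+ j = ((-1) ^+ n + 1) / 2 :> R.
Proof.
have h2 : 2 != 0 :> R by rewrite pnatr_eq0.
elim: n => [|n IH]; first by rewrite big_ord1 expr0; by field.
rewrite big_ord_recr /= IH exprS; by field.
Qed.

Lemma sign_sub (R : numFieldType) n i : (i <= n)%N ->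
  (-1) ^+ (n - i) = (-1) ^+ n * (-1) ^+ i :> R.
Proof.
move=> h; by rewrite -{2}(subnK h) exprD -mulrA -expr2 sqrr_sign mulr1.
Qed.

Lemma harm_alt n :
  \sum_(j < n.+1) (-1) ^+ (n - j) / ((n.+1 - j)%N)%:R
  = harmonic n.+1 - harmonic (n.+1)./2 :> rat.
Proof.
elim: n => [|n IH].
  by rewrite big_ord1 /harmonic /= big_ord1 big_ord0.
rewrite big_ord_recl /=.
have -> : \sum_(i < n.+1) (-1) ^+ (n.+1 - bump 0 i) / ((n.+2 - bump 0 i)%N)%:R
   = \sum_(j < n.+1) (-1) ^+ (n - j) / ((n.+1 - j)%N)%:R :> rat.
  by apply: eq_bigr => i _; rewrite /bump /= add1n !subSS.
rewrite IH /harmonic (_ : (n.+2 - _)%N = n.+2) // [in X in _ = X - _]big_ord_recr /= uphalf_half.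
rewrite -signr_odd /=.
have hn := odd_double_half n.
case: (odd n) hn => /= hn.
  rewrite add1n expr0; ring.
rewrite add0n [in X in _ = _ - X]big_ord_recr /= expr1.
have -> : (n.+2)%:R = 2 * (n./2.+1)%:R :> rat.
  by rewrite -[in LHS]hn -doubleS -mul2n natrM.
have h1 : (n./2.+1)%:R != 0 :> rat by rewrite pnatr_eq0.
field; by rewrite nat1r.
Qed.

Theorem mainTheorem12 (C : numClosedFieldType) :
  (forall (n : nat) (a : C), (forall k : nat, a != - (k.+1)%:R) ->
     \sum_(j < n.+1) \sum_(i < j.+1)
        (binomR (n%:R + a + 1) i / binomR (n%:R + a) j) * (-1) ^+ i
     = ((-1) ^+ n + 1) / 2)
  /\
  (forall n : nat,
     \sum_(j < n.+1) \sum_(i < j.+1)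
        (('C(n.+2, i))%:R / ('C(n, j))%:R) * (-1) ^+ (n - i)
     = (n.+1)%:R * (harmonic n.+1 - harmonic (n.+1)./2) :> rat).
Proof.
split.
  move=> n a ha; set x := n%:R + a.
  rewrite -sum_sign; apply: eq_bigr => j _.
  have nz : binomR x j != 0.
    rewrite /binomR mulf_neq0 ?invr_neq0 ?fact_neq0 //.
    apply/prodf_neq0 => k _.
    have hk : (k < n)%N by apply: leq_trans (ltn_ord k) _; rewrite -ltnS.
    apply/negP; rewrite subr_eq0 => /eqP e.
    have ea : a = k%:R - n%:R by rewrite -e /x; ring.
    move: (ha (n - k.+1)%N); rewrite subnSK // natrB ?(ltnW hk) // ea opprB.
    by rewrite eqxx.
  transitivity ((binomR x j)^-1 * \sum_(i < j.+1) (-1) ^+ i * binomR (x + 1) i).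
    rewrite mulr_sumr; apply: eq_bigr => i _; ring.
  by rewrite alt_binomR addrK mulrCA mulVf ?mulr1.
move=> n.
rewrite -harm_alt mulr_sumr; apply: eq_bigr => j _.
have hj : (j <= n)%N by rewrite -ltnS.
transitivity ((-1) ^+ n / ('C(n, j))%:R * \sum_(i < j.+1) (-1) ^+ i * ('C(n.+2, i))%:R : rat).
  rewrite mulr_sumr; apply: eq_bigr => i _.
  rewrite sign_sub; last by apply: leq_trans hj; rewrite -ltnS.
  ring.
rewrite alt_bin sign_sub //.
have e := congr1 (fun m => m%:R : rat) (mul_bin_down n.+1 j).
rewrite /= !natrM in e.
have h1 : ('C(n, j))%:R != 0 :> rat by rewrite pnatr_eq0 -lt0n bin_gt0.
have h2 : ((n.+1 - j)%N)%:R != 0 :> rat by rewrite pnatr_eq0 subn_eq0 -ltnNge ltnS.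
have -> : ('C(n.+1, j))%:R = n.+1%:R * ('C(n, j))%:R / ((n.+1 - j)%N)%:R :> rat.
  by rewrite e mulrC mulKf.
field; by rewrite ?h1 ?h2.
Qed.
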